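(* $\widehat{\mathbb{C}^{\mathcal{D}_0}}$ is an algebraically closed field, $\widehat{\mathbb{R}^{\mathcal{D}_0}}$ is a real closed field, and $\widehat{\mathbb{C}^{\mathcal{D}_0}}=\widehat{\mathbb{R}^{\mathcal{D}_0}}\oplus i\,\widehat{\mathbb{R}^{\mathcal{D}_0}}$.
   Context: Fix $d\in\mathbb{N}$ and let $\mathcal{D}_0=\mathcal{D}(\mathbb{R}^d)$ (compactly supported $C^\infty$ functions $\mathbb{R}^d\to\mathbb{C}$). For $\varphi\in\mathcal{D}_0$ let $R_\varphi=\sup\{\|x\|:\varphi(x)\neq0\}$ if $\varphi\neq0$, $R_0=1$. For $n\in\mathbb{N}$, $\mathcal{D}_n$ is the set of $\varphi\in\mathcal{D}_0$ that are real-valued, even, with $R_\varphi\le1/n$, $\int\varphi=1$, $\int x^\alpha\varphi(x)dx=0$ for $1\le|\alpha|\le n$, $\int|\varphi|\le1+1/n$, and $\sup_x|\partial^\alpha\varphi(x)|\le R_\varphi^{-2(|\alpha|+d)}$ for $|\alpha|\le n$. Let $\mathfrak c=\mathrm{card}(\mathbb{R})$ and let $\mathcal{U}$ be a fixed free ultrafilter on $\mathcal{D}_0$ containing every $\mathcal{D}_n$ and which is $\mathfrak{c}^+$-good (for every $\Gamma\subseteq\mathcal{D}_0$ with $\mathrm{card}\,\Gamma\le\mathfrak c$ and every map $R$ from finite subsets of $\Gamma$ into $\mathcal{U}$ with $X\subseteq Y\Rightarrow R(X)\supseteq R(Y)$, there is a map $S$ from finite subsets of $\Gamma$ into $\mathcal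 U$ with $S(X\cup Y)=S(X)\cap S(Y)$ and $S(X)\subseteq R(X)$). A property $P(\varphi)$ holds a.e. if $\{\varphi\in\mathcal{D}_0:P(\varphi)\}\in\mathcal{U}$. A net is a map $\mathcal{D}_0\to\mathbb{C}$, written $(A_\varphi)$. $\mathcal{M}(\mathbb{C}^{\mathcal{D}_0})$ is the set of nets for which there is $m\in\mathbb{N}$ with $|A_\varphi|\le R_\varphi^{-m}$ a.e.; $\mathcal{N}(\mathbb{C}^{\mathcal{D}_0})$ is the set of nets with $|A_\varphi|<R_\varphi^{p}$ a.e. for every $p\in\mathbb{N}$. $\widehat{\mathbb{C}^{\mathcal{D}_0}}=\mathcal{M}(\mathbb{C}^{\mathcal{D}_0})/\mathcal{N}(\mathbb{C}^{\mathcal{D}_0})$ with pointwise ring operations; $\widehat{A_\varphi}$ is the class of $(A_\varphi)$; $\widehat{\mathbb{R}^{\mathcal{D}_0}}$ is the set of classes of real-valued moderate nets. $\mathbb{C}$ embeds via constant nets. *)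

(* Defs.v *)
From HB Require Import structures.
From mathcomp Require Import all_boot all_order all_algebra.
From mathcomp Require Import all_classical all_reals all_analysis.
From mathcomp Require Import complex.

Set Implicit Arguments.
Unset Strict Implicit.
Unset Printing Implicit Defensive.

Import Order.TTheory GRing.Theory Num.Theory.
Import numFieldNormedType.Exports.
Local Open Scope classical_set_scope.
Local Open Scope ring_scope.

Section ColombeauDefs.
Variables (R : realType) (d : nat).

Local Notation V := 'rV[R]_d.

Definition enorm (x : V) : R := Num.sqrt (\sum_(i < d) x ord0 i ^+ 2).

Definition cmod (z : R[i]) : R := Num.sqrt (complex.Re z ^+ 2 + complex.Im z ^+ 2).

Definition evec (i : 'I_d) : V := delta_mx ord0 i.

Definition partialR (i : 'I_d) (f : V -> R) : V -> R :=
  fun x => derive f x (evec i).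

Definition iter_partialR (l : seq 'I_d) (f : V -> R) : V -> R :=
  foldr partialR f l.

Definition smoothR (f : V -> R) : Prop :=
  forall l : seq 'I_d, continuous (iter_partialR l f) /\
    forall (i : 'I_d) (x : V), derivable (iter_partialR l f) x (evec i).

Definition is_test (phi : V -> R[i]) : Prop :=
  smoothR (fun x => complex.Re (phi x)) /\ smoothR (fun x => complex.Im (phi x)) /\
  exists r : R, forall x, r < enorm x -> phi x = 0.

Definition D0 := {phi : V -> R[i] | is_test phi}.

Definition Rphi (phi : D0) : R :=
  if pselect (sval phi = (fun _ => 0)) then 1
  else sup [set enorm x | x in [set x | sval phi x <> 0]].

Definition mabs (alpha : 'I_d -> nat) : nat := (\sum_(i < d) alpha i)%N.

Definition mlist (alpha : 'I_d -> nat) : seq 'I_d :=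
  flatten [seq nseq (alpha i) i | i <- enum 'I_d].

Definition dalpha (alpha : 'I_d -> nat) (f : V -> R[i]) : V -> R[i] :=
  fun x => (iter_partialR (mlist alpha) (fun y => complex.Re (f y)) x
            +i* iter_partialR (mlist alpha) (fun y => complex.Im (f y)) x)%C.

Definition xpow (x : V) (alpha : 'I_d -> nat) : R :=
  \prod_(i < d) x ord0 i ^+ alpha i.

Definition setcoord (x : V) (i : 'I_d) (t : R) : V :=
  \row_j (if j == i then t else x ord0 j).

(* Lebesgue integral over R^d, computed as an iterated integral
   (for the continuous compactly supported integrands used below this is the
   d-dimensional Lebesgue integral, by Fubini) *)
Fixpoint iint (l : seq 'I_d) (f : V -> R) (x : V) : R :=
  match l with
  | [::] => f x
  | i :: l' => Rintegral (@lebesgue_measure R) setT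
                 (fun t => iint l' f (setcoord x i t))
  end.

Definition intRd (f : V -> R) : R := iint (enum 'I_d) f 0.

Definition intCd (f : V -> R[i]) : R[i] :=
  (intRd (fun x => complex.Re (f x)) +i* intRd (fun x => complex.Im (f x)))%C.

Definition Dn (n : nat) : set D0 := [set phi : D0 |
  (forall x, complex.Im (sval phi x) = 0) /\
  (forall x, sval phi (- x) = sval phi x) /\
  Rphi phi <= n%:R^-1 /\
  intCd (sval phi) = 1 /\
  (forall alpha, (1 <= mabs alpha <= n)%N ->
      intCd (fun x => (xpow x alpha)%:C%C * sval phi x) = 0) /\
  intRd (fun x => cmod (sval phi x)) <= 1 + n%:R^-1 /\
  (forall alpha, (mabs alpha <= n)%N -> forall x,
      cmod (dalpha alpha (sval phi) x) <= Rphi phi ^- (2 * (mabs alpha + d)))].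

Definition free_ultrafilter (U : set_system D0) : Prop :=
  UltraFilter U /\ forall phi : D0, ~ U [set phi].

Definition cplus_good (U : set_system D0) : Prop :=
  forall (Gam : set D0), (Gam #<= [set: R])%card ->
  forall Rm : set D0 -> set D0,
    (forall X, finite_set X -> X `<=` Gam -> U (Rm X)) ->
    (forall X Y, finite_set X -> finite_set Y -> X `<=` Y -> Y `<=` Gam ->
        Rm Y `<=` Rm X) ->
  exists S : set D0 -> set D0,
    (forall X, finite_set X -> X `<=` Gam -> U (S X) /\ S X `<=` Rm X) /\
    (forall X Y, finite_set X -> finite_set Y -> X `<=` Gam -> Y `<=` Gam ->
        S (X `|` Y) = S X `&` S Y).

Definition net := D0 -> R[i].

Definition moderate (U : set_system D0) (A : net) : Prop :=
  exists m : nat, U [set phi | cmod (A phi) <= Rphi phi ^- m].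

Definition negligible (U : set_system D0) (A : net) : Prop :=
  forall p : nat, U [set phi | cmod (A phi) < Rphi phi ^+ p].

Definition real_net (A : net) : Prop := forall phi, complex.Im (A phi) = 0.

Definition cst (c : R[i]) : net := fun _ => c.

(* M is a subring of C^{D0} containing the constants and N is an ideal of M,
   so that Chat = M/N is a commutative ring with pointwise operations *)
Definition hat_ring (U : set_system D0) : Prop :=
  [/\ (forall c, moderate U (cst c)),
      (forall A B, moderate U A -> moderate U B ->
         moderate U (fun phi => A phi + B phi) /\
         moderate U (fun phi => - A phi) /\
         moderate U (fun phi => A phi * B phi)),
      (forall A, negligible U A -> moderate U A),
      (forall A B, negligible U A -> negligible U B ->
         negligible U (fun phi => A phi + B phi)) &
      (forall A B, negligible U A -> moderate U B ->
         negligible U (fun phi => A phi * B phi))].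

Definition hat_field (U : set_system D0) : Prop :=
  hat_ring U /\ ~ negligible U (cst 1) /\
  forall A, moderate U A -> ~ negligible U A ->
    exists B, moderate U B /\ negligible U (fun phi => A phi * B phi - 1).

(* Chat is algebraically closed (in the form of GRing.closed_field_axiom) *)
Definition hat_alg_closed (U : set_system D0) : Prop :=
  forall (n : nat) (P : nat -> net), (0 < n)%N ->
    (forall k, moderate U (P k)) ->
    exists X, moderate U X /\
      negligible U (fun phi => X phi ^+ n - \sum_(k < n) P k phi * X phi ^+ k).

(* Rhat (classes of real-valued moderate nets) is a real closed field:
   a field which is formally real (-1 is not a sum of squares), in which every
   element or its opposite is a square, and in which every polynomial of odd
   degree has a root. *)
Definition hat_real_closed (U : set_system D0) : Prop :=
  [/\ ~ negligible U (cst 1),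
      (forall A, real_net A -> moderate U A -> ~ negligible U A ->
         exists B, real_net B /\ moderate U B /\
           negligible U (fun phi => A phi * B phi - 1)),
      (forall (n : nat) (B : nat -> net),
         (forall k, real_net (B k) /\ moderate U (B k)) ->
         ~ negligible U (fun phi => 1 + \sum_(k < n) B k phi ^+ 2)),
      (forall A, real_net A -> moderate U A ->
         exists B, real_net B /\ moderate U B /\
           (negligible U (fun phi => A phi - B phi ^+ 2) \/
            negligible U (fun phi => A phi + B phi ^+ 2))) &
      (forall (n : nat) (P : nat -> net), odd n ->
         (forall k, real_net (P k) /\ moderate U (P k)) ->
         exists X, real_net X /\ moderate U X /\
           negligible U (fun phi => X phi ^+ n - \sum_(k < n) P k phi * X phi ^+ k))].

Definition hat_decomp (U : set_system D0) : Prop :=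
  (forall A, moderate U A ->
     exists B C, [/\ real_net B, moderate U B, real_net C, moderate U C &
       negligible U (fun phi => A phi - (B phi + 'i%C * C phi))]) /\
  (forall B C, real_net B -> moderate U B -> real_net C -> moderate U C ->
     negligible U (fun phi => B phi + 'i%C * C phi) ->
     negligible U B /\ negligible U C).

End ColombeauDefs.

(* Main.v *)
Require Import Defs.
From HB Require Import structures.
From mathcomp Require Import all_boot all_order all_algebra.
From mathcomp Require Import all_classical all_reals all_analysis.
From mathcomp Require Import complex polyrcf.
Import Order.TTheory GRing.Theory Num.Theory.
Local Open Scope classical_set_scope.
Local Open Scope ring_scope.
Set Implicit Arguments.
Unset Strict Implicit.


Lemma cmod_normc (R : realType) (z : R[i]) : cmod z = Normc.normc z.
Proof. by case: z. Qed.

Lemma cmod_ge0 (R : realType) (z : R[i]) : 0 <= cmod z.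
Proof. exact: sqrtr_ge0. Qed.

Lemma cmodD (R : realType) (a b : R[i]) : cmod (a + b) <= cmod a + cmod b.
Proof. rewrite !cmod_normc; exact: le_normcD. Qed.

Lemma cmodM (R : realType) (a b : R[i]) : cmod (a * b) = cmod a * cmod b.
Proof. rewrite !cmod_normc; exact: Normc.normcM. Qed.

Lemma cmodN (R : realType) (a : R[i]) : cmod (- a) = cmod a.
Proof. rewrite !cmod_normc; exact: normcN. Qed.

Lemma cmod1 (R : realType) : cmod (1 : R[i]) = 1.
Proof. rewrite !cmod_normc; exact: Normc.normc1. Qed.

Lemma cmod0 (R : realType) : cmod (0 : R[i]) = 0.
Proof. rewrite !cmod_normc; exact: Normc.normc0. Qed.

Lemma cmodV (R : realType) (a : R[i]) : cmod (a^-1) = (cmod a)^-1.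
Proof. rewrite !cmod_normc; exact: Normc.normcV. Qed.

Lemma cmodX (R : realType) (a : R[i]) n : cmod (a ^+ n) = cmod a ^+ n.
Proof.
elim: n => [|n IH]; first by rewrite !expr0 cmod1.
by rewrite !exprS cmodM IH.
Qed.

Lemma cmod_real (R : realType) (x : R) : cmod (x%:C%C) = `|x|.
Proof. by rewrite /cmod /= expr0n /= addr0 sqrtr_sqr. Qed.

Lemma cmod_eq0 (R : realType) (a : R[i]) : cmod a = 0 -> a = 0.
Proof. rewrite cmod_normc; exact: Normc.eq0_normc. Qed.

Lemma cmod_sum (R : realType) n (F : 'I_n -> R[i]) :
  cmod (\sum_(k < n) F k) <= \sum_(k < n) cmod (F k).
Proof.
elim: n F => [|n IH] F; first by rewrite !big_ord0 cmod0.
rewrite !big_ord_recr /=; apply: le_trans; first exact: cmodD.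
by rewrite lerD2r IH.
Qed.

Lemma cmodRe (R : realType) (a : R[i]) : `|complex.Re a| <= cmod a.
Proof.
case: a => x y; rewrite /cmod /= -sqrtr_sqr ler_wsqrtr //.
by rewrite lerDl sqr_ge0.
Qed.

Lemma cmodIm (R : realType) (a : R[i]) : `|complex.Im a| <= cmod a.
Proof.
case: a => x y; rewrite /cmod /= -sqrtr_sqr ler_wsqrtr //.
by rewrite lerDr sqr_ge0.
Qed.

Lemma mlist0 d : mlist (fun _ : 'I_d => 0%N) = [::].
Proof. by rewrite /mlist; elim: (enum 'I_d). Qed.

Lemma mabs0 d : mabs (fun _ : 'I_d => 0%N) = 0%N.
Proof. by rewrite /mabs big1. Qed.

Lemma dalpha0 (R : realType) d (f : 'rV[R]_d -> R[i]) x :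
  dalpha (fun _ => 0%N) f x = f x.
Proof. by rewrite /dalpha mlist0 /=; case: (f x). Qed.

Lemma Rphi_ge0 (R : realType) d (phi : D0 R d) : 0 <= Rphi phi.
Proof.
rewrite /Rphi; destruct pselect as [h|nz]; first exact: ler01.
have [x fx] : exists x, sval phi x <> 0.
  apply: contrapT => hn; apply: nz; apply: funext => x.
  by apply: contrapT => hx; apply: hn; exists x.
have [_ [_ [r hr]]] := svalP phi.
apply: (le_trans (sqrtr_ge0 _)); rewrite -/(enorm x).
apply: ub_le_sup; last by exists x.
exists r => _ [y yS <-]; rewrite leNgt; apply/negP => ry; exact: yS (hr _ ry).
Qed.

Lemma Rphi_pos (R : realType) d n (phi : D0 R d) : (0 < d)%N -> Dn n phi ->
  0 < Rphi phi.
Proof.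
move=> d0 [_ [_ [_ [_ [_ [_ hd]]]]]].
rewrite lt_def Rphi_ge0 andbT; apply/eqP => h0.
have z : sval phi = (fun _ => 0).
  apply: funext => x; apply: cmod_eq0; apply/eqP; rewrite eq_le cmod_ge0 andbT.
  have := hd (fun _ => 0%N); rewrite mabs0 => /(_ isT x).
  have dn : (d == 0%N) = false by case: (d) d0.
  by rewrite dalpha0 h0 add0n expr0n muln_eq0 /= dn invr0.
move: h0; rewrite /Rphi; destruct pselect as [e|nz]; last by []. 
  by move/eqP; rewrite oner_eq0.
Qed.

Lemma d0_false (R : realType) (U : set_system (D0 R 0)) :
  free_ultrafilter U -> U (Dn 1) -> False.
Proof.
move=> [UF free] UD; have [phi1 D1phi] := filter_ex UD.
have E : forall psi : D0 R 0, Dn 1 psi -> sval psi = (fun _ => 1).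
  move=> psi [_ [_ [_ [hI _]]]]; apply: funext => x.
  rewrite (thinmx0 x); rewrite -hI /intCd /intRd.
  have -> : enum 'I_0 = [::] by apply/size0nil; rewrite size_enum_ord.
  by rewrite /=; case: (sval psi 0).
apply: (free phi1); apply: filterS UD => psi Dpsi.
move: (E _ Dpsi) (E _ D1phi); case: psi {Dpsi} => f pf; case: phi1 {D1phi} => g pg /=.
move=> ef eg; subst f g; congr exist; exact: Prop_irrelevance.
Qed.

Lemma rle1 (R : realType) (r : R) n : 0 < r -> r <= n.+1%:R^-1 -> r <= 1.
Proof. by move=> r0 h; apply: le_trans h _; rewrite invf_le1 // ler1n. Qed.

Lemma rinv_ge (R : realType) (r : R) n : 0 < r -> r <= n.+1%:R^-1 ->
  n.+1%:R <= r^-1.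
Proof.
by move=> r0 h; rewrite -(invrK (n.+1%:R : R)) lef_pV2 ?posrE ?invr_gt0 ?ltr0Sn.
Qed.

Lemma rmono (R : realType) (r : R) m m' : 0 < r -> r <= 1 -> (m <= m')%N ->
  r ^- m <= r ^- m'.
Proof. by move=> r0 r1 h; rewrite -!exprVn; apply: ler_weXn2l; rewrite ?invf_ge1. Qed.

Lemma rge1 (R : realType) (r : R) m : 0 < r -> r <= 1 -> 1 <= r ^- m.
Proof. by move=> r0 r1; have := rmono r0 r1 (leq0n m); rewrite expr0 invr1. Qed.

Lemma rpos (R : realType) (r : R) m : 0 < r -> 0 < r ^- m.
Proof. by move=> r0; rewrite invr_gt0 exprn_gt0. Qed.

Lemma rmul (R : realType) (r : R) a b : r ^- a * r ^- b = r ^- (a + b).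
Proof. by rewrite exprD invfM. Qed.

Lemma rnmul (R : realType) (r : R) p m : 0 < r -> r ^+ (p + m) * r ^- m = r ^+ p.
Proof. by move=> r0; rewrite exprD mulfK // expf_neq0 // gt_eqF. Qed.

Lemma rS (R : realType) (r : R) m : r ^- m.+1 = r ^- m * r^-1.
Proof. by rewrite exprSr invfM. Qed.

Lemma root_bound (R : realType) n (a : nat -> R[i]) (x : R[i]) (M : R) :
  (0 < n)%N -> 1 <= M -> (forall k, (k < n)%N -> cmod (a k) <= M) ->
  x ^+ n = \sum_(k < n) a k * x ^+ k -> cmod x <= n%:R * M.
Proof.
move=> n0 M1 hM hx.
have M0 : 0 <= M by apply: le_trans M1.
have nM1 : 1 <= n%:R * M.
  by apply: (le_trans M1); rewrite ler_peMl // ler1n.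
case: (leP (cmod x) 1) => c1; first exact: le_trans c1 nM1.
case: n n0 hM hx {nM1} => // n _ hM hx.
have c0 : 0 < cmod x by apply: lt_trans c1.
have : cmod x ^+ n.+1 <= n.+1%:R * M * cmod x ^+ n.
  rewrite -cmodX hx; apply: le_trans; first exact: cmod_sum.
  rewrite [X in _ <= X](_ : _ = \sum_(k < n.+1) M * cmod x ^+ n); last first.
    by rewrite sumr_const card_ord -mulrA mulr_natl.
  apply: ler_sum => k _; rewrite cmodM cmodX; apply: ler_pM.
  - exact: cmod_ge0.
  - by rewrite exprn_ge0 // cmod_ge0.
  - exact: hM.
  - by apply: ler_weXn2l; [exact: ltW | rewrite -ltnS].
by rewrite exprS ler_pM2r // exprn_gt0.
Qed.

Definition Gs (R : realType) d n : set (D0 R d) :=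
  [set phi | 0 < Rphi phi /\ Rphi phi <= n.+1%:R^-1].

Lemma UGs (R : realType) d (U : set_system (D0 R d)) (FU : Filter U) :
  (0 < d)%N -> (forall n, (0 < n)%N -> U (Dn n)) -> forall n, U (Gs n).
Proof.
move=> d0 HD n; apply: filterS (HD n.+1 isT) => phi Dphi; split.
  exact: Rphi_pos d0 Dphi.
by case: Dphi => _ [_ [h _]].
Qed.

Lemma ring_ok (R : realType) d (U : set_system (D0 R d)) (UF : UltraFilter U)
  (HG : forall n, U (Gs n)) : hat_ring U.
Proof.
split.
- move=> c; pose N := Num.Def.archi_bound (cmod c).
  exists 1%N; apply: filterS (HG N) => phi [r0 rle] /=.
  rewrite /cst expr1; apply: le_trans (ltW (archi_boundP (cmod_ge0 c))) _.
  apply: le_trans (rinv_ge r0 rle); rewrite /N; rewrite ler_nat; exact: leqnSn.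
- move=> A B [m1 h1] [m2 h2]; split; [|split].
  + exists (maxn m1 m2).+1.
    apply: filterS (filterI (filterI h1 h2) (HG 1%N)) => phi [[/= a b] [r0 rle]].
    have r1 := rle1 r0 rle.
    apply: le_trans; first exact: cmodD.
    rewrite rS; apply: le_trans (lerD (le_trans a (rmono r0 r1 (leq_maxl m1 m2)))
         (le_trans b (rmono r0 r1 (leq_maxr m1 m2)))) _.
    rewrite -mulr2n -mulr_natr; apply: ler_wpM2l.
      by rewrite invr_ge0 exprn_ge0 // ltW.
    exact: rinv_ge r0 rle.
  + exists m1; apply: filterS h1 => phi /=; by rewrite cmodN.
  + exists (m1 + m2)%N.
    apply: filterS (filterI h1 h2) => phi [/= a b].
    rewrite cmodM -rmul; apply: ler_pM => //; exact: cmod_ge0.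
- move=> A h; exists 0%N; apply: filterS (h 0%N) => phi /= /ltW.
  by rewrite expr0 invr1.
- move=> A B h1 h2 p.
  apply: filterS (filterI (filterI (h1 p.+1) (h2 p.+1)) (HG 1%N)) =>
    phi [[/= a b] [r0 rle]].
  apply: le_lt_trans; first exact: cmodD.
  apply: lt_le_trans (ltrD a b) _.
  rewrite -mulr2n -mulr_natr exprSr -mulrA ger_pMr ?exprn_gt0 //.
  by rewrite -ler_pdivlMr // div1r.
- move=> A B h1 [m h2] p.
  apply: filterS (filterI (filterI (h1 (p + m)%N) h2) (HG 0%N)) =>
    phi [[/= a b] [r0 _]].
  rewrite cmodM; apply: le_lt_trans (ler_wpM2l (cmod_ge0 _) b) _.
  by rewrite -(rnmul p m r0) ltr_pM2r // rpos.
Qed.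

Definition invnet (R : realType) d (A : net R d) p : net R d := fun phi =>
  if cmod (A phi) < Rphi phi ^+ p then 0 else (A phi)^-1.

Lemma not_negl1 (R : realType) d (U : set_system (D0 R d)) (UF : UltraFilter U) :
  ~ Defs.negligible U (cst 1).
Proof.
move=> /(_ 0%N) h; have [phi] := filter_ex h.
by rewrite /= /cst cmod1 expr0 ltxx.
Qed.

Lemma inv_ok (R : realType) d (U : set_system (D0 R d)) (UF : UltraFilter U)
  (HG : forall n, U (Gs n)) (A : net R d) :
  ~ Defs.negligible U A ->
  exists p, moderate U (invnet A p) /\
    Defs.negligible U (fun phi => A phi * invnet A p phi - 1).
Proof.
move=> nA.
have [p hp] : exists p, ~ U [set phi | cmod (A phi) < Rphi phi ^+ p].
  apply: contrapT => hn; apply: nA => p; apply: contrapT => hp; apply: hn.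
  by exists p.
have hC : U (~` [set phi | cmod (A phi) < Rphi phi ^+ p]).
  by case: (in_ultra_setVsetC [set phi | cmod (A phi) < Rphi phi ^+ p] UF).
have key : forall phi, (~` [set phi | cmod (A phi) < Rphi phi ^+ p]) phi ->
    Gs 0 phi -> [/\ invnet A p phi = (A phi)^-1, A phi != 0 &
                   Rphi phi ^+ p <= cmod (A phi)].
  move=> phi /= /negP nlt [r0 _]; rewrite /invnet (negbTE nlt).
  have le : Rphi phi ^+ p <= cmod (A phi) by rewrite leNgt.
  split => //; apply/eqP => A0; move: le; rewrite A0 cmod0.
  by rewrite leNgt exprn_gt0.
exists p; split.
  exists p; apply: filterS (filterI hC (HG 0%N)) => phi [h g] /=.
  have [-> A0 le] := key phi h g; have [r0 _] := g.
  rewrite /= cmodV lef_pV2 // posrE ?exprn_gt0 //.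
  by apply: lt_le_trans le; rewrite exprn_gt0.
move=> q; apply: filterS (filterI hC (HG 0%N)) => phi [h g] /=.
have [-> A0 _] := key phi h g; have [r0 _] := g.
by rewrite /= divrr ?unitfE // subrr cmod0 exprn_gt0.
Qed.

Lemma real_eq (R : realType) (z : R[i]) : complex.Im z = 0 -> z = (complex.Re z)%:C%C.
Proof. by case: z => x y /= ->. Qed.

Lemma invnet_real (R : realType) d (A : net R d) p :
  real_net A -> real_net (invnet A p).
Proof.
move=> hA phi; rewrite /invnet; case: ifP => // _.
by rewrite (real_eq (hA phi)) -fmorphV.
Qed.

Lemma field_ok (R : realType) d (U : set_system (D0 R d)) (UF : UltraFilter U)
  (HG : forall n, U (Gs n)) : hat_field U.
Proof.
split; first exact: ring_ok.
split; first exact: not_negl1.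
move=> A _ nA; have [p [h1 h2]] := inv_ok UF HG nA; by exists (invnet A p).
Qed.

Lemma mod_fam (R : realType) d (U : set_system (D0 R d)) (UF : UltraFilter U)
  (HG : forall n, U (Gs n)) (P : nat -> net R d) :
  (forall k, moderate U (P k)) -> forall n, exists m,
  U [set phi | forall k, (k < n)%N -> cmod (P k phi) <= Rphi phi ^- m].
Proof.
move=> hP; elim=> [|n [m hm]].
  by exists 0%N; apply: filterS filterT => phi _ k.
have [m' hm'] := hP n; exists (maxn m m').
apply: filterS (filterI (filterI hm hm') (HG 0%N)) => phi [[a b] [r0 rle]] k.
have r1 := rle1 r0 rle.
rewrite ltnS leq_eqVlt => /orP[/eqP->|kn].
  exact: le_trans b (rmono r0 r1 (leq_maxr m m')).
exact: le_trans (a k kn) (rmono r0 r1 (leq_maxl m m')).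
Qed.

Lemma poly_ok (R : realType) d (U : set_system (D0 R d)) (UF : UltraFilter U)
  (HG : forall n, U (Gs n)) n (P : nat -> net R d) (X : net R d) :
  (0 < n)%N -> (forall k, moderate U (P k)) ->
  (forall phi, X phi ^+ n = \sum_(k < n) P k phi * X phi ^+ k) ->
  moderate U X /\
  Defs.negligible U (fun phi => X phi ^+ n - \sum_(k < n) P k phi * X phi ^+ k).
Proof.
move=> n0 hP hX; split.
  have [m hm] := mod_fam UF HG hP n; exists m.+1.
  apply: filterS (filterI hm (HG n)) => phi [hk [r0 rle]] /=.
  have r1 := rle1 r0 rle.
  apply: le_trans (root_bound n0 (rge1 m r0 r1) hk (hX phi)) _.
  rewrite rS mulrC; apply: ler_wpM2l; first exact/ltW/rpos.
  by apply: le_trans (rinv_ge r0 rle); rewrite ler_nat.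
move=> q; apply: filterS (HG 0%N) => phi [r0 _] /=.
by rewrite hX subrr cmod0 exprn_gt0.
Qed.

Lemma alg_ok (R : realType) d (U : set_system (D0 R d)) (UF : UltraFilter U)
  (HG : forall n, U (Gs n)) : hat_alg_closed U.
Proof.
move=> n P n0 hP.
have ex : forall phi, exists x : R[i], x ^+ n == \sum_(k < n) P k phi * x ^+ k.
  move=> phi; have [x hx] := solve_monicpoly (fun k => P k phi) n0.
  by exists x; apply/eqP.
pose X phi := xchoose (ex phi).
have hX phi : X phi ^+ n = \sum_(k < n) P k phi * X phi ^+ k.
  exact: (eqP (xchooseP (ex phi))).
by exists X; apply: poly_ok.
Qed.

Lemma real_root (R : realType) n (a : nat -> R) : odd n ->
  exists x : R, x ^+ n == \sum_(k < n) a k * x ^+ k.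
Proof.
move=> on; pose p : {poly R} := 'X^n - \poly_(k < n) a k.
have sp : size p = n.+1.
  rewrite /p size_polyDl size_polyXn // size_polyN ltnS; exact: size_poly.
have [|x rx] := @odd_poly_root R p; first by rewrite sp /= negbK.
exists x; rewrite -subr_eq0; move: rx.
by rewrite /root /p hornerD hornerN hornerXn horner_poly.
Qed.

Lemma sqrt_le (R : realType) (y : R) : 1 <= y -> Num.sqrt y <= y.
Proof.
move=> y1; have y0 : 0 <= y by apply: le_trans y1.
have u1 : 1 <= Num.sqrt y by rewrite -sqrtr1 ler_wsqrtr.
rewrite -{2}(sqr_sqrtr y0) expr2 ler_peMr //; exact: le_trans u1.
Qed.

Lemma real_ok (R : realType) d (U : set_system (D0 R d)) (UF : UltraFilter U)
  (HG : forall n, U (Gs n)) : hat_real_closed U.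
Proof.
split.
- exact: not_negl1.
- move=> A hA _ nA; have [p [h1 h2]] := inv_ok UF HG nA.
  by exists (invnet A p); split; [exact: invnet_real|].
- move=> n B hB /(_ 0%N) h; have [phi] := filter_ex h; rewrite /= expr0.
  have -> : 1 + \sum_(k < n) B k phi ^+ 2 =
      (1 + \sum_(k < n) complex.Re (B k phi) ^+ 2)%:C%C.
    rewrite rmorphD rmorph1 rmorph_sum /=; congr (_ + _).
    by apply: eq_bigr => k _; rewrite rmorphXn /= -(real_eq ((hB k).1 phi)).
  have s0 : 0 <= \sum_(k < n) complex.Re (B k phi) ^+ 2.
    by apply: sumr_ge0 => k _; exact: sqr_ge0.
  by rewrite cmod_real ger0_norm ?addr_ge0 // ltNge lerDl s0.
- move=> A hA [m hm].
  pose a phi := complex.Re (A phi).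
  exists (fun phi => (Num.sqrt `|a phi|)%:C%C); split; first by [].
  split.
    exists m; apply: filterS (filterI hm (HG 0%N)) => phi [h [r0 rle]] /=.
    rewrite cmod_real ger0_norm ?sqrtr_ge0 //.
    have ha : `|a phi| <= Rphi phi ^- m := le_trans (cmodRe _) h.
    apply: le_trans (ler_wsqrtr ha) _; apply: sqrt_le.
    exact: rge1 m r0 (rle1 r0 rle).
  case: (in_ultra_setVsetC [set phi | 0 <= a phi] UF) => hS; [left|right];
    move=> q; apply: filterS (filterI hS (HG 0%N)) => phi [h [r0 _]] /=.
    have -> : A phi - (Num.sqrt `|a phi|)%:C%C ^+ 2 =
        (a phi - Num.sqrt `|a phi| ^+ 2)%:C%C.
      by rewrite rmorphB rmorphXn /= -(real_eq (hA phi)).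
    by rewrite sqr_sqrtr ?normr_ge0 // ger0_norm // subrr cmod_real normr0 exprn_gt0.
  have -> : A phi + (Num.sqrt `|a phi|)%:C%C ^+ 2 =
      (a phi + Num.sqrt `|a phi| ^+ 2)%:C%C.
    by rewrite rmorphD rmorphXn /= -(real_eq (hA phi)).
  move/negP: h; rewrite -ltNge => h.
  by rewrite sqr_sqrtr ?normr_ge0 // ltr0_norm // addrN cmod_real normr0 exprn_gt0.
- move=> n P on hP.
  have ex : forall phi, exists x : R,
      x ^+ n == \sum_(k < n) complex.Re (P k phi) * x ^+ k.
    move=> phi; exact: (@real_root R n (fun k => complex.Re (P k phi)) on).
  pose X phi := (xchoose (ex phi))%:C%C.
  have hX phi : X phi ^+ n = \sum_(k < n) P k phi * X phi ^+ k.
    rewrite /X -rmorphXn (eqP (xchooseP (ex phi))) rmorph_sum.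
    by apply: eq_bigr => k _; rewrite rmorphM rmorphXn /= -(real_eq ((hP k).1 phi)).
  have n0 : (0 < n)%N by case: n on {hP ex X hX}.
  exists X; split; first by [].
  apply: (poly_ok UF HG n0 _ hX) => k; exact: (hP k).2.
Qed.

Lemma ReIm_i (R : realType) (x y : R) :
  complex.Re (x%:C + 'i * y%:C)%C = x /\ complex.Im (x%:C + 'i * y%:C)%C = y.
Proof. by rewrite /= !(mul0r, mulr0, mul1r, subr0, addr0, add0r, oppr0). Qed.

Lemma decomp_ok (R : realType) d (U : set_system (D0 R d)) (UF : UltraFilter U)
  (HG : forall n, U (Gs n)) : hat_decomp U.
Proof.
split.
  move=> A [m hm].
  exists (fun phi => (complex.Re (A phi))%:C%C), (fun phi => (complex.Im (A phi))%:C%C).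
  split => //.
  - exists m; apply: filterS hm => phi /= h; rewrite cmod_real.
    exact: le_trans (cmodRe _) h.
  - exists m; apply: filterS hm => phi /= h; rewrite cmod_real.
    exact: le_trans (cmodIm _) h.
  - move=> q; apply: filterS (HG 0%N) => phi [r0 _] /=.
    by rewrite -complexE subrr cmod0 exprn_gt0.
move=> B C hB _ hC _ h; split => q; apply: filterS (h q) => phi /=;
  rewrite (real_eq (hB phi)) (real_eq (hC phi)) => hh;
  apply: le_lt_trans hh; rewrite cmod_real.
  by have [e _] := ReIm_i (complex.Re (B phi)) (complex.Re (C phi));
    have := cmodRe ((complex.Re (B phi))%:C + 'i * (complex.Re (C phi))%:C)%C;
    rewrite e.
by have [_ e] := ReIm_i (complex.Re (B phi)) (complex.Re (C phi));
  have := cmodIm ((complex.Re (B phi))%:C + 'i * (complex.Re (C phi))%:C)%C;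
  rewrite e.
Qed.

Theorem theorem4p2 (R : realType) (d : nat) (U : set_system (D0 R d)) :
  free_ultrafilter U ->
  (forall n : nat, (0 < n)%N -> U (Dn n)) ->
  cplus_good U ->
  [/\ hat_field U, hat_alg_closed U, hat_real_closed U & hat_decomp U].
Proof.
move=> [UF free] HD _.
have [d0|dpos] : d = 0%N \/ (0 < d)%N by case: (d) => [|k]; [left|right].
  subst d; exfalso; exact: (d0_false (conj UF free) (HD 1%N isT)).
have FU : Filter U := @filter_filter _ _ (@ultra_proper _ _ UF).
have HG := @UGs R d U FU dpos HD.
split; [exact: field_ok UF HG | exact: alg_ok UF HG | exact: real_ok UF HG | exact: decomp_ok UF HG].
Qed.
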